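(* Let $L_{\max}>0$ and let $V$ be a speed-density function on $[0,L_{\max}]$. Define the critical vehicle density $L^*=\arg\max_{0\le L\le L_{\max}}[V(L)L]$ and the optimum vehicle density for the eVCC system $L^\dagger=\arg\max_{0\le L\le L_{\max}}[V(L)^2L]$. Suppose (1) $V$ is monotonically non-increasing and $V(L)\ge 0$ for $0\le L\le L_{\max}$; and (2) either $V$ is concave, or $V(L)=G-\sum_{k=1}^K c_kL^{\alpha_k}$ with $\alpha_k\in(0,+\infty)\cup(-1,-\tfrac12)$, $c_k\ge 0$ for all $k$, and $G\ge 0$. Then $L^\dagger\le L^*$.
   Context: $V(L)$ denotes the average vehicle speed on the road as a function of vehicle density $L$, and $L_{\max}$ is the traffic-jam density. The traffic flow rate is $F=VL$, and $L^*$ maximizes it. In the short-deadline regime the deadline violation probability of the vehicular cloud computing system is (up to constants independent of $L$) $\exp(-c\,L\,V(L)^2)$ with $c>0$, so the density minimizing it is the maximizer $L^\dagger$ of $V(L)^2L$. The maximizers are denoted with argmax as single points. *)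

(* Defs.v *)
From Stdlib Require Import Reals List.
Open Scope R_scope.

Definition fsum (f : nat -> R) (K : nat) : R :=
  fold_right Rplus 0 (map f (seq 1 K)).

(* x is the (unique) maximizer of g on [0, Lmax]: "x = argmax_{0<=L<=Lmax} g L"
   with argmax a single point. *)
Definition is_argmax (g : R -> R) (Lmax x : R) : Prop :=
  0 <= x <= Lmax /\
  (forall L, 0 <= L <= Lmax -> g L <= g x) /\
  (forall y, 0 <= y <= Lmax -> (forall L, 0 <= L <= Lmax -> g L <= g y) -> y = x).

Definition nonincreasing_on (V : R -> R) (Lmax : R) : Prop :=
  forall x y, 0 <= x -> x <= y -> y <= Lmax -> V y <= V x.

Definition concave_on (V : R -> R) (Lmax : R) : Prop :=
  forall x y t, 0 <= x <= Lmax -> 0 <= y <= Lmax -> 0 <= t <= 1 ->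
    t * V x + (1 - t) * V y <= V (t * x + (1 - t) * y).

(* V(L) = G - sum_{k=1}^K c_k L^{alpha_k}, alpha_k in (0,+oo) U (-1,-1/2),
   c_k >= 0, G >= 0; the identity is required for 0 < L <= Lmax
   (L^alpha is undefined at L = 0 for negative alpha). *)
Definition power_sum_form (V : R -> R) (Lmax : R) : Prop :=
  exists (K : nat) (c alpha : nat -> R) (G : R),
    (1 <= K)%nat /\ 0 <= G /\
    (forall k, (1 <= k <= K)%nat ->
        0 <= c k /\ (0 < alpha k \/ (-1 < alpha k /\ alpha k < -1/2))) /\
    (forall L, 0 < L <= Lmax ->
        V L = G - fsum (fun k => c k * Rpower L (alpha k)) K).

(* Main.v *)
Require Import Defs.
From Stdlib Require Import Reals List Lra.
Open Scope R_scope.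

Theorem theorem3 (Lmax : R) (V : R -> R) (Lstar Ldag : R) :
  0 < Lmax ->
  is_argmax (fun L => V L * L) Lmax Lstar ->
  is_argmax (fun L => V L ^ 2 * L) Lmax Ldag ->
  nonincreasing_on V Lmax ->
  (forall L, 0 <= L <= Lmax -> 0 <= V L) ->
  (concave_on V Lmax \/ power_sum_form V Lmax) ->
  Ldag <= Lstar.
Proof.
  intros HL [Hs [Hsmax _]] [Hd [Hdmax Hduniq]] Hmono Hpos _.
  destruct (Rle_dec Ldag Lstar) as [h|h]; [exact h|].
  exfalso.
  assert (Hv : V Ldag <= V Lstar) by (apply Hmono; lra).
  assert (Hf : V Ldag * Ldag <= V Lstar * Lstar) by (apply Hsmax; lra).
  assert (H0 : 0 <= V Ldag) by (apply Hpos; lra).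
  assert (H1 : 0 <= V Ldag * Ldag) by (apply Rmult_le_pos; lra).
  assert (Hg : V Ldag ^ 2 * Ldag <= V Lstar ^ 2 * Lstar).
  { replace (V Ldag ^ 2 * Ldag) with (V Ldag * (V Ldag * Ldag)) by ring.
    replace (V Lstar ^ 2 * Lstar) with (V Lstar * (V Lstar * Lstar)) by ring.
    apply Rmult_le_compat; lra. }
  assert (Lstar = Ldag).
  { apply Hduniq; [lra|]. intros L HL'. specialize (Hdmax L HL'). simpl in *. lra. }
  lra.
Qed.
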